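(* Let $n\ge2$, let $\mathfrak{g}_n$ be the Lie algebra defined in the context, $Z(\mathfrak{g}_n)=\operatorname{span}\{z_{i,j}\}$ its centre and $\overline{\mathfrak{g}}_n=\mathfrak{g}_n/Z(\mathfrak{g}_n)$. The map $\overline{\rho}:\overline{\mathfrak{g}}_n\to\mathfrak{sl}_n(\mathbb{K})$ sending the class of $x=ah+bx_++cx_-+\sum_{i=1}^{n-2}(d_iy_{i,+}+e_iy_{i,-})$ to the $n\times n$ matrix whose first $n-2$ rows are zero, whose $(n-1)$-th row is $(d_1,\dots,d_{n-2},a,b)$ and whose $n$-th row is $(e_1,\dots,e_{n-2},c,-a)$, is a representation of $\overline{\mathfrak{g}}_n$.
   Context: $\mathbb{K}$ is $\mathbb{R}$ or $\mathbb{C}$. For $n\ge2$, $\mathfrak{g}_n$ is the Lie algebra with basis $h,x_-,x_+$, $y_{i,\pm}$ ($1\le i\le n-2$), $z_{i,j}$ ($1\le i\le j\le n-2$), whose nonzero brackets (up to antisymmetry) are $[x_+,x_-]=h$, $[h,x_\pm]=\pm2x_\pm$, $[h,y_{i,\pm}]=\pm y_{i,\pm}$, $[x_-,y_{i,+}]=y_{i,-}$, $[x_+,y_{i,-}]=y_{i,+}$, $[y_{i,+},y_{j,-}]=z_{\min(i,j),\max(i,j)}$; all other brackets of basis elements vanish. *)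

(* Defs.v *)
From HB Require Import structures.
From mathcomp Require Import all_boot all_order all_algebra.
Set Implicit Arguments. Unset Strict Implicit. Unset Printing Implicit Defensive.
Import Order.TTheory GRing.Theory Num.Theory.
Local Open Scope ring_scope.

(* k = n - 2 : number of y_{i,+} (resp. y_{i,-}); indices i are 'I_k (0-based). *)

(* index set of the z_{i,j}, i <= j *)
Definition Zidx (k : nat) := {p : 'I_k * 'I_k | (p.1 <= p.2)%N}.

(* labels of the basis of the quotient  gbar_n = g_n / Z(g_n):
   classes of h, x_+, x_-, y_{i,+}, y_{i,-} *)
Definition Bbar (k : nat) := ((((unit + unit) + unit) + 'I_k) + 'I_k)%type.
(* labels of the basis of g_n : h, x_+, x_-, y_{i,+}, y_{i,-}, z_{i,j} *)
Definition B (k : nat) := (Bbar k + Zidx k)%type.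

Inductive lbl (k : nat) :=
| LH | LXp | LXm | LYp of 'I_k | LYm of 'I_k | LZ of Zidx k.

Definition lab (k : nat) (b : B k) : lbl k :=
  match b with
  | inl (inl (inl (inl (inl tt)))) => LH k
  | inl (inl (inl (inl (inr tt)))) => LXp k
  | inl (inl (inl (inr tt))) => LXm k
  | inl (inl (inr i)) => LYp i
  | inl (inr i) => LYm i
  | inr p => LZ p
  end.

Definition bH k : B k := inl (inl (inl (inl (inl tt)))).
Definition bXp k : B k := inl (inl (inl (inl (inr tt)))).
Definition bXm k : B k := inl (inl (inl (inr tt))).
Definition bYp k (i : 'I_k) : B k := inl (inl (inr i)).
Definition bYm k (i : 'I_k) : B k := inl (inr i).

Definition gn (K : fieldType) (k : nat) := {ffun B k -> K}.

Definition gscale (K : fieldType) k (a : K) (u : gn K k) : gn K k :=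
  [ffun c => a * u c].

Definition ev (K : fieldType) k (b : B k) : gn K k := [ffun c => (c == b)%:R].

Definition zv (K : fieldType) k (i j : 'I_k) : gn K k :=
  match (insub (if (i <= j)%N then (i, j) else (j, i)) : option (Zidx k)) with
  | Some p => ev K (inr p)
  | None => 0
  end.

Definition br (K : fieldType) k (a b : B k) : gn K k :=
  match lab a, lab b with
  | LXp, LXm => ev K (bH k)
  | LXm, LXp => - ev K (bH k)
  | LH, LXp => gscale 2%:R (ev K (bXp k))
  | LXp, LH => - (gscale 2%:R (ev K (bXp k)))
  | LH, LXm => - (gscale 2%:R (ev K (bXm k)))
  | LXm, LH => gscale 2%:R (ev K (bXm k))
  | LH, LYp i => ev K (bYp i)
  | LYp i, LH => - ev K (bYp i)
  | LH, LYm i => - ev K (bYm i)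
  | LYm i, LH => ev K (bYm i)
  | LXm, LYp i => ev K (bYm i)
  | LYp i, LXm => - ev K (bYm i)
  | LXp, LYm i => ev K (bYp i)
  | LYm i, LXp => - ev K (bYp i)
  | LYp i, LYm j => zv K i j
  | LYm j, LYp i => - zv K i j
  | _, _ => 0
  end.

Definition gbracket (K : fieldType) k (u v : gn K k) : gn K k :=
  \sum_(a : B k) \sum_(b : B k) gscale (u a * v b) (br K a b).

(* elements of the quotient gbar_n = g_n / span{z_{i,j}}, as coordinate
   vectors in the basis of classes of h, x_+, x_-, y_{i,+}, y_{i,-} *)
Definition gbar (K : fieldType) (k : nat) := {ffun Bbar k -> K}.

Definition proj (K : fieldType) k (u : gn K k) : gbar K k := [ffun c => u (inl c)].

Definition gbar_scale (K : fieldType) k (a : K) (u : gbar K k) : gbar K k :=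
  [ffun c => a * u c].

(* coefficient d_{j+1} (resp. e_{j+1}) of an element of gbar_n, 0 if j >= k *)
Definition dcoef (K : fieldType) k (u : gbar K k) (j : nat) : K :=
  match (insub j : option 'I_k) with Some i => u (inl (inr i)) | None => 0 end.
Definition ecoef (K : fieldType) k (u : gbar K k) (j : nat) : K :=
  match (insub j : option 'I_k) with Some i => u (inr i) | None => 0 end.

Definition rhobar (K : fieldType) (n : nat) (u : gbar K (n - 2)) : 'M[K]_n :=
  let a := u (inl (inl (inl (inl tt)))) in
  let b := u (inl (inl (inl (inr tt)))) in
  let c := u (inl (inl (inr tt))) in
  \matrix_(i < n, j < n)
    if (i : nat) == (n - 2)%N then
      (if (j < n - 2)%N then dcoef u j else if (j : nat) == (n - 2)%N then a else b)
    else if (i : nat) == (n - 1)%N then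
      (if (j < n - 2)%N then ecoef u j else if (j : nat) == (n - 2)%N then c else - a)
    else 0.
Arguments rhobar {K} n u.

(* Main.v *)
Require Import Defs.
From HB Require Import structures.
From mathcomp Require Import all_boot all_order all_algebra.
From mathcomp Require Import ring zify.
Import GRing.Theory.
Local Open Scope ring_scope.

Section S.
Variable (K : fieldType) (k : nat).
Implicit Types (u v : gn K k).

Lemma big_unitK (F : unit -> K) : \sum_(i : unit) F i = F tt.
Proof. by rewrite (big_pred1 tt) // => -[]. Qed.

Lemma sumBk (F : B k -> K) : \sum_(b : B k) F b =
  \sum_(b : Bbar k) F (inl b) + \sum_(p : Zidx k) F (inr p).
Proof. by rewrite big_sumType. Qed.

Lemma sumBbar (F : Bbar k -> K) : \sum_(b : Bbar k) F b =
  F (inl (inl (inl (inl tt)))) + F (inl (inl (inl (inr tt)))) + F (inl (inl (inr tt)))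
  + \sum_(i : 'I_k) F (inl (inr i)) + \sum_(i : 'I_k) F (inr i).
Proof. by rewrite !big_sumType !big_unitK. Qed.

Lemma br_inr_l p (b : B k) : br K (inr p) b = 0.
Proof. by case: b => [[[[[[]|[]]|[]]|j]|j]|q]. Qed.
Lemma br_inr_r p (b : B k) : br K b (inr p) = 0.
Proof. by case: b => [[[[[[]|[]]|[]]|j]|j]|q]. Qed.

Lemma zv_inl i j c : @zv K k i j (inl c) = 0.
Proof. rewrite /zv; case: insubP => [p _ _|_]; by rewrite ffunE. Qed.

Lemma sum_delta (i0 : 'I_k) (F : 'I_k -> K) :
  \sum_(j : 'I_k) F j * (i0 == j)%:R = F i0.
Proof.
rewrite (bigD1 i0) //= eqxx mulr1 big1 ?addr0 // => j /negbTE.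
by rewrite eq_sym => ->; rewrite mulr0.
Qed.

Lemma gbE u v c : gbracket u v (inl c) =
  \sum_(a : Bbar k) \sum_(b : Bbar k) u (inl a) * v (inl b) * br K (inl a) (inl b) (inl c).
Proof.
rewrite /gbracket sum_ffunE sumBk [X in _ + X]big1 ?addr0; last first.
  move=> p _; rewrite sum_ffunE big1 // => b _; by rewrite ffunE br_inr_l ffunE mulr0.
apply: eq_bigr => a _; rewrite sum_ffunE sumBk [X in _ + X]big1 ?addr0.
  by apply: eq_bigr => b _; rewrite ffunE.
by move=> p _; rewrite ffunE br_inr_r ffunE mulr0.
Qed.


Definition lb (c : Bbar k) : lbl k := lab (inl c).
Definition eb (x c : Bbar k) : K :=
  match lb x, lb c with
  | LH, LH => 1 | LXp, LXp => 1 | LXm, LXm => 1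
  | LYp i, LYp j => (i == j)%:R | LYm i, LYm j => (i == j)%:R
  | _, _ => 0 end.
Definition cH : Bbar k := inl (inl (inl (inl tt))).
Definition cXp : Bbar k := inl (inl (inl (inr tt))).
Definition cXm : Bbar k := inl (inl (inr tt)).
Definition cYp i : Bbar k := inl (inr i).
Definition cYm i : Bbar k := inr i.
Definition brv (a b c : Bbar k) : K :=
  match lb a, lb b with
  | LXp, LXm => eb cH c
  | LXm, LXp => - eb cH c
  | LH, LXp => 2%:R * eb cXp c
  | LXp, LH => - (2%:R * eb cXp c)
  | LH, LXm => - (2%:R * eb cXm c)
  | LXm, LH => 2%:R * eb cXm c
  | LH, LYp i => eb (cYp i) c
  | LYp i, LH => - eb (cYp i) c
  | LH, LYm i => - eb (cYm i) c
  | LYm i, LH => eb (cYm i) c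
  | LXm, LYp i => eb (cYm i) c
  | LYp i, LXm => - eb (cYm i) c
  | LXp, LYm i => eb (cYp i) c
  | LYm i, LXp => - eb (cYp i) c
  | _, _ => 0 end.

Lemma oppE (f : gn K k) x : (- f) x = - f x. Proof. by rewrite ffunE. Qed.
Lemma gscaleE (a : K) (f : gn K k) x : gscale a f x = a * f x. Proof. by rewrite ffunE. Qed.
Lemma evE x c : ev K (inl x) (inl c) = eb x c.
Proof.
rewrite ffunE.
case: x => [[[[[]|[]]|[]]|i]|i]; case: c => [[[[[]|[]]|[]]|j]|j] //=; by rewrite /eb /lb /= eq_sym.
Qed.

Lemma brvE a b c : br K (inl a) (inl b) (inl c) = brv a b c.
Proof.
case: a => [[[[[]|[]]|[]]|i]|i]; case: b => [[[[[]|[]]|[]]|j]|j];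
  cbv beta iota delta [br lab]; rewrite ?oppE ?gscaleE ?zv_inl ?evE ?ffunE ?oppr0 /brv /lb //=.
Qed.

Lemma gbE2 u v c : gbracket u v (inl c) =
  \sum_(a : Bbar k) \sum_(b : Bbar k) u (inl a) * v (inl b) * brv a b c.
Proof. by rewrite gbE; apply: eq_bigr => a _; apply: eq_bigr => b _; rewrite brvE. Qed.

Lemma sumr_0 (F : 'I_k -> K) : \sum_(i < k) (F i * 0) = 0.
Proof. by rewrite big1 // => i _; rewrite mulr0. Qed.
Lemma sumr_00 (F : 'I_k -> 'I_k -> K) : \sum_(i < k) \sum_(j < k) (F i j * 0) = 0.
Proof. by rewrite big1 // => i _; rewrite sumr_0. Qed.
Lemma sum_deltaN (i0 : 'I_k) (F : 'I_k -> K) :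
  \sum_(j : 'I_k) F j * - (j == i0)%:R = - F i0.
Proof.
rewrite (bigD1 i0) //= eqxx mulrN1 big1 ?addr0 // => j /negbTE ->.
by rewrite oppr0 mulr0.
Qed.
Lemma sum_delta' (i0 : 'I_k) (F : 'I_k -> K) :
  \sum_(j : 'I_k) F j * (j == i0)%:R = F i0.
Proof.
rewrite (bigD1 i0) //= eqxx mulr1 big1 ?addr0 // => j /negbTE ->.
by rewrite mulr0.
Qed.

Ltac crunch := rewrite gbE2; under eq_bigr do rewrite sumBbar; rewrite sumBbar /brv /eb /lb /=;
  rewrite !big_split /= ?oppr0 ?mulr0 ?sumr_0 ?sumr_00 ?sum_delta' ?sum_deltaN ?mulr0 ?mulr1 ?mulrN1 ?addr0 ?add0r /bH /bXp /bXm /bYp /bYm.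


Lemma coordH u v : gbracket u v (inl cH) =
  u (bXp k) * v (bXm k) - u (bXm k) * v (bXp k).
Proof. crunch; ring. Qed.
Lemma coordXp u v : gbracket u v (inl cXp) =
  2%:R * (u (bH k) * v (bXp k) - u (bXp k) * v (bH k)).
Proof. crunch; ring. Qed.
Lemma coordXm u v : gbracket u v (inl cXm) =
  2%:R * (u (bXm k) * v (bH k) - u (bH k) * v (bXm k)).
Proof. crunch; ring. Qed.
Lemma coordYp u v i : gbracket u v (inl (cYp i)) =
  u (bH k) * v (bYp i) - u (bYp i) * v (bH k) + u (bXp k) * v (bYm i) - u (bYm i) * v (bXp k).
Proof. crunch; ring. Qed.
Lemma coordYm u v i : gbracket u v (inl (cYm i)) =
  u (bYm i) * v (bH k) - u (bH k) * v (bYm i) + u (bXm k) * v (bYp i) - u (bYp i) * v (bXm k).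
Proof. crunch; ring. Qed.

End S.

Section M.
Variable (K : fieldType) (n : nat) (hn : (2 <= n)%N).

Lemma h2 : (n - 2 < n)%N. Proof. move: hn; lia. Qed.
Lemma h3 : (n - 1 < n)%N. Proof. move: hn; lia. Qed.
Definition i2 : 'I_n := Ordinal h2.
Definition i3 : 'I_n := Ordinal h3.
Lemma n21 : (n - 1 == n - 2)%N = false.
Proof. apply/negbTE; move: hn; lia. Qed.
Lemma n12 : (n - 2 == n - 1)%N = false. Proof. by rewrite eq_sym n21. Qed.
Lemma n12lt : (n - 1 < n - 2)%N = false.
Proof. apply/negbTE; move: hn; lia. Qed.

Lemma sum2 (F : 'I_n -> K) :
  (forall l : 'I_n, (l : nat) != (n - 2)%N -> (l : nat) != (n - 1)%N -> F l = 0) ->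
  \sum_l F l = F i2 + F i3.
Proof.
move=> HF; rewrite (bigD1 i2) //= (bigD1 i3) /=; last first.
  by rewrite -val_eqE /= ?n12 ?n21.
rewrite big1 ?addr0 // => l /andP[]; rewrite -!val_eqE /= => a b; exact: HF.
Qed.

Lemma rho_row0 (u : gbar K (n - 2)) (l j : 'I_n) :
  (l : nat) != (n - 2)%N -> (l : nat) != (n - 1)%N -> rhobar n u l j = 0.
Proof. by rewrite mxE => /negbTE -> /negbTE ->. Qed.

Lemma mulE (u v : gbar K (n - 2)) i j :
  (rhobar n u *m rhobar n v) i j =
  rhobar n u i i2 * rhobar n v i2 j + rhobar n u i i3 * rhobar n v i3 j.
Proof.
rewrite mxE sum2 // => l a b; by rewrite (rho_row0 _ _ _ a b) mulr0.
Qed.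

Lemma subE (A B : 'M[K]_n) i j : (A - B) i j = A i j - B i j.
Proof. by rewrite !mxE. Qed.

End M.

Theorem corollary3p6 (K : fieldType) (n : nat) (hn : (2 <= n)%N) :
  (forall (a : K) (u v : gbar K (n - 2)),
      rhobar n (gbar_scale a u + v) = a *: rhobar n u + rhobar n v) /\
  (forall u : gbar K (n - 2), \tr (rhobar n u) = 0) /\
  (forall u v : gn K (n - 2),
      rhobar n (proj (gbracket u v)) =
      rhobar n (proj u) *m rhobar n (proj v) - rhobar n (proj v) *m rhobar n (proj u)).
Proof.
have e21 := @n21 n hn; have e12 := @n12 n hn; have e12lt := @n12lt n hn.
split; [|split].
- move=> a u v; apply/matrixP => i j; rewrite !mxE /dcoef /ecoef.
  case: insubP => [j' _ _|_]; rewrite ?ffunE; repeat case: ifP => _; rewrite ?ffunE; ring.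
- move=> u; rewrite /mxtrace (@sum2 K n hn); last by move=> l a b; apply: rho_row0.
  rewrite !mxE /= eqxx e21 (ssrnat.ltnn (n - 2)) e12lt eqxx; ring.
- move=> u v; apply/matrixP => i j; rewrite subE !(@mulE K n hn) !mxE /= !eqxx ?e21 ?e12 ?(ssrnat.ltnn (n - 2)) ?e12lt.
  rewrite /dcoef /ecoef; case: insubP => [j' _ _|_]; rewrite ?ffunE.
  + rewrite coordYp coordYm coordH coordXp coordXm.
    repeat case: ifP => _; rewrite /bH /bXp /bXm /bYp /bYm; ring.
  + rewrite coordH coordXp coordXm.
    repeat case: ifP => _; rewrite /bH /bXp /bXm /bYp /bYm; ring.
Qed.
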